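(* Let $n\geq 1$ and let $r,k\in\mathbf{Z}$ with $r\geq 1$. Then \begin{align*} \tilde{A}_{n}^{(r,k)}(x)&=x\tilde{A}_{n-1}^{(r,k)}(x-1)+r\sum_{a=0}^{n-1}\frac{(-1)^{a+1}a!}{a+2}\binom{n-1}{a}\tilde{A}_{n-1-a}^{(r+1,k)}(x)\\ &\quad +\frac{1}{n}\left(\tilde{A}_{n}^{(r+1,k-1)}(x)-\tilde{A}_{n}^{(r+1,k)}(x)\right). \end{align*}
   Context: For $k\in\mathbf{Z}$, $Lif_{k}(x)=\sum_{m=0}^{\infty}\frac{x^{m}}{m!(m+1)^{k}}$. For integers $r\geq 0$, $k\in\mathbf{Z}$, the polynomials $\tilde{A}_{n}^{(r,k)}(x)$ are defined by \[\left(\frac{t}{(1+t)\log(1+t)}\right)^{r}Lif_{k}\left(-\log(1+t)\right)(1+t)^{x}=\sum_{n=0}^{\infty}\tilde{A}_{n}^{(r,k)}(x)\frac{t^{n}}{n!}.\] *)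

(* Defs.v *)
From HB Require Import structures.
From mathcomp Require Import all_boot all_order all_algebra.
Set Implicit Arguments. Unset Strict Implicit. Unset Printing Implicit Defensive.
Import Order.TTheory GRing.Theory Num.Theory.
Local Open Scope ring_scope.

Section FPS.
Variable R : realFieldType.

Definition fps := nat -> R.

Definition fps_one : fps := fun n => if n == 0%N then 1 else 0.
Definition fps_t : fps := fun n => if n == 1%N then 1 else 0.

Definition fps_add (a b : fps) : fps := fun n => a n + b n.
Definition fps_opp (a : fps) : fps := fun n => - a n.

Definition fps_mul (a b : fps) : fps :=
  fun n => \sum_(i < n.+1) a i * b (n - i)%N.

Fixpoint fps_pow (a : fps) (m : nat) : fps :=
  match m with 0%N => fps_one | m'.+1 => fps_mul a (fps_pow a m') end.

(* composition f(g(t)), meaningful when g(0) = 0: since g^m has valuation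
   >= m, the n-th coefficient only involves m <= n *)
Definition fps_comp (f g : fps) : fps :=
  fun n => \sum_(m < n.+1) f m * fps_pow g m n.

(* multiplicative inverse of a series with constant term 1:
   1/a = 1/(1+u) = sum_m (-1)^m u^m with u = a - 1 *)
Definition fps_inv1 (a : fps) : fps :=
  fps_comp (fun m => (-1) ^+ m) (fps_add a (fps_opp fps_one)).

(* log(1+t) *)
Definition log1p_ser : fps :=
  fun n => if n == 0%N then 0 else (-1) ^+ n.+1 / n%:R.

(* log(1+t)/t *)
Definition log1p_div_t : fps := fun n => (-1) ^+ n / (n.+1)%:R.

(* t / ((1+t) log(1+t)) = 1 / ((1+t) * (log(1+t)/t)) *)
Definition h_ser : fps :=
  fps_inv1 (fps_mul (fps_add fps_one fps_t) log1p_div_t).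

(* Lif_k(y) = sum_m y^m / (m! (m+1)^k), k an integer *)
Definition Lif_ser (k : int) : fps :=
  fun m => (m`!%:R * ((m.+1)%:R ^ k))^-1.

(* (1+t)^x = sum_n binom(x,n) t^n *)
Definition binom_ser (x : R) : fps :=
  fun n => (\prod_(i < n) (x - i%:R)) / n`!%:R.

(* generating function
   (t/((1+t)log(1+t)))^r * Lif_k(-log(1+t)) * (1+t)^x *)
Definition Atilde_gen (r : nat) (k : int) (x : R) : fps :=
  fps_mul (fps_pow h_ser r)
          (fps_mul (fps_comp (Lif_ser k) (fps_opp log1p_ser)) (binom_ser x)).

Definition Atilde (n r : nat) (k : int) (x : R) : R :=
  n`!%:R * Atilde_gen r k x n.

End FPS.

(* Main.v *)
Require Import Defs.
From HB Require Import structures.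
From mathcomp Require Import all_boot all_order all_algebra.
From mathcomp Require Import ring lra.
Import Order.TTheory GRing.Theory Num.Theory.
Unset Printing Implicit Defensive.
Local Open Scope ring_scope.

Section Aux.
Context {R : realFieldType}.
Implicit Types (p q : {poly R}) (a b : fps R).

Definition Tr (M : nat) (a : fps R) : {poly R} := \poly_(i < M) a i.
Definition eqm (M : nat) p q := forall i, (i < M)%N -> p`_i = q`_i.

Lemma coef_Tr M a i : (Tr M a)`_i = if (i < M)%N then a i else 0.
Proof. by rewrite /Tr coef_poly. Qed.

Lemma eqm_refl M p : eqm M p p. Proof. by []. Qed.
Lemma eqm_sym M p q : eqm M p q -> eqm M q p.
Proof. by move=> h i hi; rewrite h. Qed.
Lemma eqm_trans M p q s : eqm M p q -> eqm M q s -> eqm M p s.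
Proof. by move=> h1 h2 i hi; rewrite h1 ?h2. Qed.
Lemma eqm_eq M p q : p = q -> eqm M p q. Proof. by move=> ->. Qed.
Lemma eqm_le M N p q : (N <= M)%N -> eqm M p q -> eqm N p q.
Proof. by move=> hNM h i hi; apply: h; apply: leq_trans hNM. Qed.
Lemma eqmD M p1 p2 q1 q2 : eqm M p1 p2 -> eqm M q1 q2 -> eqm M (p1 + q1) (p2 + q2).
Proof. by move=> h1 h2 i hi; rewrite !coefD h1 ?h2. Qed.
Lemma eqmN M p1 p2 : eqm M p1 p2 -> eqm M (- p1) (- p2).
Proof. by move=> h1 i hi; rewrite !coefN h1. Qed.
Lemma eqmB M p1 p2 q1 q2 : eqm M p1 p2 -> eqm M q1 q2 -> eqm M (p1 - q1) (p2 - q2).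
Proof. by move=> h1 h2; apply: eqmD => //; apply: eqmN. Qed.
Lemma eqmZ M c p1 p2 : eqm M p1 p2 -> eqm M (c *: p1) (c *: p2).
Proof. by move=> h1 i hi; rewrite !coefZ h1. Qed.
Lemma eqmMn M m p1 p2 : eqm M p1 p2 -> eqm M (p1 *+ m) (p2 *+ m).
Proof. by move=> h1 i hi; rewrite !coefMn h1. Qed.
Lemma eqmM M p1 p2 q1 q2 : eqm M p1 p2 -> eqm M q1 q2 -> eqm M (p1 * q1) (p2 * q2).
Proof.
move=> h1 h2 i hi; rewrite !coefM; apply: eq_bigr => j _.
have hj : (j < M)%N by apply: leq_ltn_trans hi; rewrite -ltnS.
have hij : (i - j < M)%N by apply: leq_ltn_trans hi; rewrite leq_subr.
by rewrite h1 // h2.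
Qed.
Lemma eqmX M m p1 p2 : eqm M p1 p2 -> eqm M (p1 ^+ m) (p2 ^+ m).
Proof. by move=> h; elim: m => [|m ih]; rewrite ?expr0 // !exprS; apply: eqmM. Qed.
Lemma eqm_sum M (I : finType) (F G : I -> {poly R}) :
  (forall i, eqm M (F i) (G i)) -> eqm M (\sum_i F i) (\sum_i G i).
Proof. by move=> h i hi; rewrite !coef_sum; apply: eq_bigr => j _; rewrite h. Qed.
Lemma eqm_deriv M p q : eqm M.+1 p q -> eqm M p^`() q^`().
Proof. by move=> h i hi; rewrite !coef_deriv h. Qed.
Lemma eqm_X M p q : eqm M p q -> eqm M.+1 ('X * p) ('X * q).
Proof. by move=> h [|i] hi; rewrite !coefXM //= h. Qed.

Arguments eqm_sym {M p q}. Arguments eqm_trans {M p q s}.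
Arguments eqmD {M p1 p2 q1 q2}. Arguments eqmN {M p1 p2}. Arguments eqmB {M p1 p2 q1 q2}.
Arguments eqmZ {M} c {p1 p2}. Arguments eqmMn {M} m {p1 p2}. Arguments eqmM {M p1 p2 q1 q2}.
Arguments eqmX {M} m {p1 p2}. Arguments eqm_deriv {M p q}. Arguments eqm_X {M p q}.
Arguments eqm_le {M} N {p q}.

Lemma Tr_mul M a b : eqm M (Tr M (fps_mul a b)) (Tr M a * Tr M b).
Proof.
move=> i hi; rewrite coef_Tr hi coefM /fps_mul; apply: eq_bigr => j _.
have hj : (j < M)%N by apply: leq_ltn_trans hi; rewrite -ltnS.
have hij : (i - j < M)%N by apply: leq_ltn_trans hi; rewrite leq_subr.
by rewrite !coef_Tr hj hij.
Qed.
Lemma Tr_add M a b : Tr M (fps_add a b) = Tr M a + Tr M b.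
Proof. by apply/polyP => i; rewrite coefD !coef_Tr /fps_add; case: ifP; rewrite ?addr0. Qed.
Lemma Tr_opp M a : Tr M (fps_opp a) = - Tr M a.
Proof. by apply/polyP => i; rewrite coefN !coef_Tr /fps_opp; case: ifP; rewrite ?oppr0. Qed.
Lemma Tr_one M : (0 < M)%N -> Tr M (fps_one R) = 1.
Proof.
move=> hM; apply/polyP => i; rewrite coef1 coef_Tr /fps_one.
case: (ltnP i M) => h; first by case: (i == 0%N).
by case: eqP => // ei; move: h hM; rewrite ei; case: M.
Qed.
Lemma Tr_t M : (1 < M)%N -> Tr M (fps_t R) = 'X.
Proof.
move=> hM; apply/polyP => i; rewrite coefX coef_Tr /fps_t.
case: (ltnP i M) => h; first by case: (i == 1%N).
by case: eqP => // ei; move: h hM; rewrite ei; case: M => [|[|]].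
Qed.
Lemma Tr_pow M a m : (0 < M)%N -> eqm M (Tr M (fps_pow a m)) (Tr M a ^+ m).
Proof.
move=> hM; elim: m => [|m ih] /=; first by rewrite Tr_one.
rewrite exprS; apply: eqm_trans (Tr_mul _ _ _) _; exact: eqmM.
Qed.

Lemma pow_val p m i : p`_0 = 0 -> (i < m)%N -> (p ^+ m)`_i = 0.
Proof.
move=> h0 him.
have : root p 0 by rewrite /root horner_coef0 h0.
case/factor_theorem => s ->; rewrite subr0 exprMn coefMXn him //.
Qed.


Lemma Tr_comp M f g : (0 < M)%N -> g 0%N = 0 ->
  eqm M (Tr M (fps_comp f g)) (\sum_(m < M) f m *: (Tr M g) ^+ m).
Proof.
move=> hM g0 i hi; rewrite coef_Tr hi coef_sum /fps_comp.
rewrite (big_ord_widen M (fun m => f m * fps_pow g m i)) // big_mkcond /=.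
apply: eq_bigr => m _; rewrite coefZ; case: ifP => hm.
  by rewrite -(Tr_pow M g m hM i hi) coef_Tr hi.
rewrite pow_val ?mulr0 //; first by rewrite coef_Tr hM.
by rewrite ltnNge -ltnS hm.
Qed.

Lemma pow_val_Tr M g m i : g 0%N = 0 -> (0 < M)%N -> (i < m)%N -> ((Tr M g) ^+ m)`_i = 0.
Proof. by move=> g0 hM him; apply: pow_val => //; rewrite coef_Tr hM. Qed.


Section Main.
Variable M : nat.
Hypothesis hM : (1 < M)%N.
Let hM0 : (0 < M)%N. Proof. exact: ltnW. Qed.

Definition LD := Tr M (@log1p_div_t R).
Definition W := (1 + 'X) * LD.
Definition H := Tr M (@h_ser R).

Lemma H_inv : eqm M (H * W) 1.
Proof.
set P := fps_mul (fps_add (fps_one R) (fps_t R)) (@log1p_div_t R).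
set g := fps_add P (fps_opp (fps_one R)).
have g0 : g 0%N = 0.
  rewrite /g /P /fps_add /fps_opp /fps_mul big_ord1 /fps_one /fps_t /log1p_div_t /=.
  by rewrite expr0 div1r invr1 addr0 mulr1 subrr.
set U := Tr M g.
have hU : eqm M U (W - 1).
  rewrite /U /g Tr_add Tr_opp Tr_one //; apply: eqmB => //.
  apply: eqm_trans (Tr_mul _ _ _) _; rewrite Tr_add Tr_one // Tr_t //.
have hH : eqm M H (\sum_(m < M) (- U) ^+ m).
  apply: eqm_trans (Tr_comp _ _ _ hM0 g0) _; apply: eqm_eq; apply: eq_bigr => m _.
  by rewrite -scaleN1r exprZn.
have e : (\sum_(m < M) (- U) ^+ m) * (1 + U) = 1 - (- U) ^+ M.
  by rewrite -opprB subrX1; ring.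
have : eqm M (H * W) ((\sum_(m < M) (- U) ^+ m) * (1 + U)).
  apply: eqmM => //; apply: eqm_sym; apply: eqm_trans (eqmD (eqm_refl _ 1) hU) _.
  by apply: eqm_eq; ring.
rewrite e => h; apply: eqm_trans h _ => i hi.
rewrite coefB pow_val ?subr0 // coefN coef_Tr hM0 g0 oppr0 //.
Qed.



Definition qser (a : nat) : R := (-1) ^+ a.+1 / (a.+2)%:R.
Definition Q := Tr M qser.
Definition LL := Tr M (@log1p_ser R).

Lemma nzD (c : R) (m : nat) : 0 < c -> c + m%:R != 0.
Proof. move=> h; rewrite gt_eqF //; have := ler0n R m; lra. Qed.

Lemma nz (m : nat) : (m.+1)%:R != 0 :> R.
Proof. by rewrite pnatr_eq0. Qed.

Lemma WQ : eqm M.-1 (W^`() + Q) 0.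
Proof.
move=> i hi; have hi1 : (i.+1 < M)%N by rewrite -ltn_predRL.
have hi0 : (i < M)%N by apply: ltnW.
rewrite coef0 coefD coef_deriv /W mulrDl mul1r coefD coefXM /= /Q /LD !coef_Tr hi1 hi0.
rewrite /log1p_div_t /qser !exprS.
have := nz i; have := nz i.+1; move: ((-1) ^+ i) => s h1 h2.
by field; rewrite !nzD ?ltr01 ?ltr0Sn.
Qed.

Lemma H_deriv : eqm M.-1 (H^`()) (H ^+ 2 * Q).
Proof.
have hK : M = M.-1.+1 by rewrite prednK.
have e1 : eqm M.-1 (H^`() * W + H * W^`()) 0.
  rewrite -derivM -(derivC (1:R)) polyC1; apply: eqm_deriv; rewrite -hK; exact: H_inv.
have e2 : eqm M.-1 W^`() (- Q).
  move=> i hi; move: (WQ i hi); rewrite coefD coefN coef0 => h.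
  by apply/eqP; rewrite -subr_eq0 opprK h.
have e3 : eqm M.-1 (H * W) 1 by apply: (eqm_le _ _ H_inv); rewrite leq_pred.
have : eqm M.-1 (H^`()) (H^`() * (H * W)) by rewrite -{1}[H^`()]mulr1; apply: eqmM => //; apply: eqm_sym.
move/eqm_trans; apply.
have -> : H^`() * (H * W) = H * (H^`() * W + H * W^`()) - H ^+ 2 * W^`() by ring.
apply: eqm_trans (eqmB (eqmM (eqm_refl _ H) e1) (eqmM (eqm_refl _ (H ^+ 2)) e2)) _.
by apply: eqm_eq; ring.
Qed.

Lemma LL_X : eqm M LL ('X * LD).
Proof.
move=> [|i] hi; rewrite coefXM /LL /LD !coef_Tr hi //= /log1p_ser /log1p_div_t //=.
by rewrite ltnW // !exprS !mulN1r opprK.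
Qed.

Lemma LL_deriv : eqm M.-1 ((1 + 'X) * LL^`()) 1.
Proof.
move=> i hi; have hi1 : (i.+1 < M)%N by rewrite -ltn_predRL.
have hi0 : (i < M)%N by apply: ltnW.
rewrite mulrDl mul1r coefD coefXM coef1 coef_deriv /LL coef_Tr hi1 /log1p_ser.
case: i hi hi1 hi0 => [|i] hi hi1 hi0.
  by rewrite /= !exprS expr0; field.
rewrite /= coef_deriv coef_Tr hi0 /= !exprS.
have := nz i; have := nz i.+1; move: ((-1) ^+ i) => s h1 h2.
by field; rewrite ?nzD ?ltr01 ?ltr0Sn.
Qed.

Lemma B_deriv x : eqm M.-1 (Tr M (binom_ser x))^`() (x *: Tr M (binom_ser (x - 1))).
Proof.
move=> i hi; have hi1 : (i.+1 < M)%N by rewrite -ltn_predRL.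
have hi0 : (i < M)%N by apply: ltnW.
rewrite coef_deriv coefZ !coef_Tr hi1 hi0 /binom_ser big_ord_recl /= subr0.
have -> : \prod_(j < i) (x - (bump 0 j)%:R) = \prod_(j < i) (x - 1 - j%:R).
  by apply: eq_bigr => j _; rewrite /bump /= add1n -addn1 natrD; ring.
move: (\prod_(j < i) _) => P.
rewrite factS natrM.
have : (i`!)%:R != 0 :> R by rewrite pnatr_eq0 -lt0n fact_gt0.
have := nz i; move=> h1 h2.
by field; rewrite h2 ?nzD ?ltr01 ?ltr0Sn.
Qed.



Definition V := Tr M (fps_opp (@log1p_ser R)).
Definition E (k : int) := Tr M (fps_comp (@Lif_ser R k) (fps_opp (@log1p_ser R))).
Definition S (k : int) := \sum_(m < M) @Lif_ser R k m *: V ^+ m.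

Lemma Lif_rel k m : @Lif_ser R (k - 1) m - @Lif_ser R k m = @Lif_ser R k m * m%:R.
Proof.
rewrite /Lif_ser expfzDr ?nz // exprN1.
have h1 := nz m; have h2 : (m.+1%:R : R) ^ k != 0 by apply: expfz_neq0.
have h3 : (m`!)%:R != 0 :> R by rewrite pnatr_eq0 -lt0n fact_gt0.
move: ((m.+1%:R : R) ^ k) h2 => a h2.
by field; rewrite h2 h3 ?nzD ?ltr01 ?ltr0Sn.
Qed.

Lemma E_S k : eqm M (E k) (S k).
Proof.
apply: Tr_comp => //; by rewrite /fps_opp /log1p_ser /= oppr0.
Qed.

Lemma E_deriv k : eqm M.-1 ('X * (E k)^`()) (H * (E (k - 1) - E k)).
Proof.
have hK : M = M.-1.+1 by rewrite prednK.
have e3 : eqm M.-1 (H * W) 1 by apply: (eqm_le _ _ (H_inv)); rewrite leq_pred.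
have eLL : eqm M.-1 ('X * LD) LL by apply: (eqm_le _ _ (eqm_sym LL_X)); rewrite leq_pred.
have eS : eqm M.-1 (E k)^`() (S k)^`() by apply: eqm_deriv; rewrite -hK; apply: E_S.
have hV : V = - LL by rewrite /V Tr_opp.
have hLL : LL = - V by rewrite hV opprK.
have hV' : eqm M.-1 ((1 + 'X) * - V^`()) 1 by rewrite hV derivN opprK; apply: LL_deriv.
have step1 : eqm M.-1 ('X * (E k)^`()) (H * ((1 + 'X) * LL * (S k)^`())).
  apply: eqm_trans (_ : eqm _ _ ('X * (E k)^`() * (H * W))) _.
    by rewrite -{1}['X * _]mulr1; apply: eqmM => //; apply: eqm_sym.
  have -> : 'X * (E k)^`() * (H * W) = H * ((1 + 'X) * ('X * LD) * (E k)^`()) by rewrite /W; ring.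
  by apply: eqmM => //; apply: eqmM => //; apply: eqmM.
apply: eqm_trans step1 _; apply: eqmM => //.
have -> : (S k)^`() = \sum_(m < M) @Lif_ser R k m *: (V^`() * V ^+ m.-1 *+ m).
  by rewrite /S (big_morph _ (@derivD R) (@deriv0 R)); apply: eq_bigr => m _; rewrite derivZ deriv_exp.
rewrite mulr_sumr.
apply: eqm_trans (_ : eqm _ _ (\sum_(m < M) (@Lif_ser R k m * m%:R) *: V ^+ m)) _.
  apply: eqm_sum => m; rewrite -scalerAr -scalerA; apply: eqmZ.
  case: m => [[|m] hm] /=; first by rewrite !mulr0n !mulr0 scale0r.
  rewrite scaler_nat.
  have -> : (1 + 'X) * LL * (V^`() * V ^+ m *+ m.+1) = (V ^+ m.+1 * ((1 + 'X) * - V^`())) *+ m.+1.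
    by rewrite hLL exprS; ring.
  by apply: eqmMn; rewrite -{2}[V ^+ m.+1]mulr1; apply: eqmM.
apply: eqm_trans (_ : eqm _ _ (S (k - 1) - S k)) _.
  by apply: eqm_eq; rewrite /S -sumrB; apply: eq_bigr => m _; rewrite -scalerBl Lif_rel.
apply: (eqm_le _ _ (eqmB (eqm_sym (E_S _)) (eqm_sym (E_S _)))); exact: leq_pred.
Qed.



Definition Gp (r : nat) (k : int) (x : R) := H ^+ r * (E k * Tr M (binom_ser x)).

Lemma Atilde_Gp n r k x : (n < M)%N -> Atilde n r k x = n`!%:R * (Gp r k x)`_n.
Proof.
move=> hn; rewrite /Atilde; congr (_ * _).
have := coef_Tr M (Atilde_gen r k x) n; rewrite hn => <-.
apply: (eqm_trans (Tr_mul _ _ _) _ n hn) => /=.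
apply: eqmM; first exact: Tr_pow.
exact: Tr_mul.
Qed.

Lemma main_id s k x : eqm M.-1 ('X * (Gp s.+1 k x)^`())
  (x%:P * ('X * Gp s.+1 k (x - 1)) + ('X * Q * Gp s.+2 k x) *+ s.+1
   + (Gp s.+2 (k - 1) x - Gp s.+2 k x)).
Proof.
set B := Tr M (binom_ser x); set B1 := Tr M (binom_ser (x - 1)).
have -> : 'X * (Gp s.+1 k x)^`() =
   ('X * H^`() * H ^+ s * E k * B) *+ s.+1 + H ^+ s.+1 * ('X * (E k)^`()) * B
   + 'X * H ^+ s.+1 * E k * B^`().
  rewrite /Gp -/B !derivM deriv_exp /=; ring.
apply: eqm_trans (_ : eqm _ _ (('X * (H ^+ 2 * Q) * H ^+ s * E k * B) *+ s.+1
   + H ^+ s.+1 * (H * (E (k - 1) - E k)) * B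
   + 'X * H ^+ s.+1 * E k * (x *: B1))) _.
  apply: eqmD; first apply: eqmD.
  - by apply: eqmMn; do 3 apply: eqmM => //; apply: eqmM => //; apply: H_deriv.
  - by apply: eqmM => //; apply: eqmM => //; apply: E_deriv.
  - by apply: eqmM => //; apply: B_deriv.
apply: eqm_eq; rewrite /Gp -/B -/B1 -mul_polyC; move: (E (k-1)) (E k) H Q B B1 (x%:P) => a b c d e f g; rewrite !exprS; ring.
Qed.

End Main.
End Aux.

Theorem theorem5 (R : realFieldType) (n r : nat) (k : int) (x : R)
  (hn : (1 <= n)%N) (hr : (1 <= r)%N) :
  Atilde n r k x =
    x * Atilde n.-1 r k (x - 1)
    + r%:R * \sum_(a < n)
        ((-1) ^+ a.+1 * a`!%:R / (a.+2)%:R * 'C(n.-1, a)%:R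
          * Atilde (n.-1 - a)%N r.+1 k x)
    + n%:R^-1 * (Atilde n r.+1 (k - 1) x - Atilde n r.+1 k x).
Proof.
case: n hn => [//|n] _; case: r hr => [//|s] _ /=.
have hM : (1 < n.+3)%N by [].
have key := main_id _ hM s k x (n.+1) (ltnSn _).
rewrite !coefD ?coefB ?coefN coefCM coefMn -mulrA !coefXM /= coef_deriv (coefM (Q _)) in key.
have hsum : \sum_(a < n.+1)
        ((-1) ^+ a.+1 * a`!%:R / (a.+2)%:R * 'C(n, a)%:R
          * Atilde (n - a)%N s.+2 k x)
   = n`!%:R * \sum_(j < n.+1) (Q n.+3)`_j * (Gp n.+3 s.+2 k x)`_(n - j).
  rewrite mulr_sumr; apply: eq_bigr => [[a ha]] _ /=.
  have han : (a <= n)%N by [].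
  have hna : (n - a < n.+3)%N by rewrite (leq_ltn_trans (leq_subr a n)) // ltnS leqW.
  rewrite (Atilde_Gp _ hM _ _ _ _ hna).
  rewrite /Q coef_Tr (ltn_trans ha (leqnSn n.+2)) /qser.
  rewrite -(bin_fact han) !natrM.
  have := @nz R a.+1; move: ((Gp n.+3 s.+2 k x)`_(n - a)) => g h.
  by field; rewrite ?nzD ?ltr01 ?ltr0Sn.
rewrite hsum !(Atilde_Gp _ hM) //; last by do 2 apply: leqW.
move: key.
move: ((Gp n.+3 s.+1 k x)`_n.+1) ((Gp n.+3 s.+1 k (x - 1))`_n) (\sum_(j < n.+1) _)
  ((Gp n.+3 s.+2 (k - 1) x)`_n.+1) ((Gp n.+3 s.+2 k x)`_n.+1) => G G1 S0 Gk1 Gk key.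
have eG : G = (n.+1%:R)^-1 * (x * G1 + S0 *+ s.+1 + (Gk1 - Gk)).
  by rewrite -key; field; rewrite ?nzD ?ltr01 ?ltr0Sn.
rewrite eG factS natrM.
have := @nz R n; have : (n`!)%:R != 0 :> R by rewrite pnatr_eq0 -lt0n fact_gt0.
move: (n`!%:R : R) => f hf hn1.
by field; rewrite ?nzD ?ltr01 ?ltr0Sn.
Qed.
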